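(* In the basic hexagonal model, for a cell $c$ with set of direct neighbours $\mathcal{N}_c$, given the ignition times $\tau(n)$ for all $n\in\mathcal{N}_c$ (together with the initial values $x(c,0)$ and $y(n,0)$), the ignition time $\tau(c)$ can be calculated in constant time.
   Context: Basic hexagonal model: cells are hexagons, each with at most $6$ direct neighbours (cells sharing an edge). The state of cell $c$ at time $t\in\mathbb{N}$ is a pair of non-negative integers $x(c,t)$, $y(c,t)$; $c$ is burning if $x(c,t)=0<y(c,t)$, alive if $x(c,t),y(c,t)>0$, dead if $y(c,t)=0$. Transition: an alive cell's $x$-value decreases by the number of burning neighbours (clipped at $0$); a burning cell's $y$-value decreases by $1$. The ignition time $\tau(c)\in\mathbb{N}\cup\{\infty\}$ is the minimum $t$ with $x(c,t)=0$ ($\infty$ if none); it satisfies $\tau(c)=\min\{t\in\mathbb{N}: x(c,0)\le\sum_{n\in\mathcal{N}_c}\max(0,\min(t-\tau(n),y(n,0)))\}$, with $\tau(c)=\infty$ if this set is empty. Arithmetic operations on numbers take constant time. *)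

(* Defs.v *)
From mathcomp Require Import all_boot.
Set Implicit Arguments. Unset Strict Implicit. Unset Printing Implicit Defensive.

(* A cell c has k direct neighbours (k <= 6), indexed by 'I_k.         *)
(*   x      = x(c,0)                                                   *)
(*   y i    = y(n_i,0)                                                 *)
(*   tau i  = tau(n_i), None standing for infinity                     *)
(*   max(0, min(t - tau i, y i))  (= 0 if tau i = infinity);           *)
(* with truncated nat subtraction, max(0, min(t - s, y)) = minn (t-s) y*)

Definition contrib (k : nat) (y : 'I_k -> nat) (tau : 'I_k -> option nat)
  (t : nat) (i : 'I_k) : nat :=
  match tau i with
  | None => 0
  | Some s => minn (t - s) (y i)
  end.

Definition burnt (k : nat) (y : 'I_k -> nat) (tau : 'I_k -> option nat)
  (t : nat) : nat := \sum_(i < k) contrib y tau t i.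

Definition is_ignition_time (k : nat) (x : nat) (y : 'I_k -> nat)
  (tau : 'I_k -> option nat) (r : option nat) : Prop :=
  match r with
  | Some t => x <= burnt y tau t /\ (forall t', x <= burnt y tau t' -> t <= t')
  | None => forall t, burnt y tau t < x
  end.

(* Constant-time computation: a loop-free program (arithmetic          *)
(* expression with conditionals) over the inputs.  Each constructor is *)
(* one constant-time arithmetic operation / comparison, and a fixed     *)
(* program is evaluated with a number of operations bounded by its      *)
(* size, independently of the input values.                             *)

(* Input variables: x(c,0); for each neighbour i, the (finite part of)
   tau(n_i) (0 if infinite), y(n_i,0), and an infinity flag (1 if
   tau(n_i) = infinity, 0 otherwise). *)
Inductive var (k : nat) : Type :=
| VX : var k
| VTau : 'I_k -> var k
| VY : 'I_k -> var k
| VInf : 'I_k -> var k.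

Inductive aexp (k : nat) : Type :=
| AVar : var k -> aexp k
| AConst : nat -> aexp k
| AAdd : aexp k -> aexp k -> aexp k
| ASub : aexp k -> aexp k -> aexp k      (* truncated subtraction *)
| AMul : aexp k -> aexp k -> aexp k
| ADiv : aexp k -> aexp k -> aexp k      (* Euclidean quotient, m %/ 0 = 0 *)
| AMod : aexp k -> aexp k -> aexp k
| AIf : bexp k -> aexp k -> aexp k -> aexp k
with bexp (k : nat) : Type :=
| BTrue : bexp k
| BLe : aexp k -> aexp k -> bexp k
| BEq : aexp k -> aexp k -> bexp k
| BNot : bexp k -> bexp k
| BAnd : bexp k -> bexp k -> bexp k
| BOr : bexp k -> bexp k -> bexp k.

Definition env_of (k : nat) (x : nat) (y : 'I_k -> nat)
  (tau : 'I_k -> option nat) (v : var k) : nat :=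
  match v with
  | VX => x
  | VTau i => if tau i is Some s then s else 0
  | VY i => y i
  | VInf i => if tau i is Some _ then 0 else 1
  end.

Fixpoint aeval (k : nat) (env : var k -> nat) (e : aexp k) : nat :=
  match e with
  | AVar v => env v
  | AConst n => n
  | AAdd a b => aeval env a + aeval env b
  | ASub a b => aeval env a - aeval env b
  | AMul a b => aeval env a * aeval env b
  | ADiv a b => aeval env a %/ aeval env b
  | AMod a b => aeval env a %% aeval env b
  | AIf c a b => if beval env c then aeval env a else aeval env b
  end
with beval (k : nat) (env : var k -> nat) (e : bexp k) : bool :=
  match e with
  | BTrue => true
  | BLe a b => aeval env a <= aeval env b
  | BEq a b => aeval env a == aeval env b
  | BNot c => ~~ beval env c
  | BAnd c d => beval env c && beval env d
  | BOr c d => beval env c || beval env d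
  end.

Record prog (k : nat) : Type := Prog { p_inf : bexp k ; p_val : aexp k }.

Definition run (k : nat) (P : prog k) (x : nat) (y : 'I_k -> nat)
  (tau : 'I_k -> option nat) : option nat :=
  let env := env_of x y tau in
  if beval env (p_inf P) then None else Some (aeval env (p_val P)).

(* Main.v *)
Require Import Defs.
From mathcomp Require Import all_boot.
From mathcomp Require Import zify.
Set Implicit Arguments. Unset Strict Implicit. Unset Printing Implicit Defensive.

Definition amin k (a b : aexp k) := AIf (BLe a b) a b.
Definition asum k (l : seq 'I_k) (f : 'I_k -> aexp k) :=
  foldr (fun i acc => AAdd (f i) acc) (AConst k 0) l.
Definition bterm k (t : aexp k) (i : 'I_k) :=
  AIf (BEq (AVar (VInf i)) (AConst k 0))
      (amin (ASub t (AVar (VTau i))) (AVar (VY i))) (AConst k 0).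
Definition Bexp k (t : aexp k) := asum (index_enum 'I_k) (bterm t).
Definition dterm k (p : aexp k) (i : 'I_k) :=
  AIf (BAnd (BEq (AVar (VInf i)) (AConst k 0))
        (BAnd (BLe (AVar (VTau i)) p)
              (BNot (BLe (AAdd (AVar (VTau i)) (AVar (VY i))) p))))
      (AConst k 1) (AConst k 0).
Definition Dexp k (p : aexp k) := asum (index_enum 'I_k) (dterm p).
Definition cexp k (p : aexp k) :=
  AAdd p (ADiv (ASub (AAdd (ASub (AVar (@VX k)) (Bexp p)) (Dexp p)) (AConst k 1))
               (Dexp p)).
Definition BigE k := asum (index_enum 'I_k) (fun i => AAdd (AVar (VTau i)) (AVar (VY i))).
Definition termE k (p : aexp k) :=
  AIf (BLe (AVar (@VX k)) (Bexp (cexp p))) (cexp p) (BigE k).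
Definition ptsE k : seq (aexp k) :=
  AConst k 0 :: flatten (map (fun i => [:: AVar (VTau i); AAdd (AVar (VTau i)) (AVar (VY i))])
                          (index_enum 'I_k)).
Definition valE k := foldr (fun e acc => amin e acc) (BigE k) (map (@termE k) (ptsE k)).
Definition theP k := Prog (BNot (BLe (AVar (@VX k)) (Bexp (BigE k)))) (valE k).

Lemma aeval_asum k env (l : seq 'I_k) f :
  aeval env (asum l f) = \sum_(i <- l) aeval env (f i).
Proof. elim: l => [|i l IH] /=; first by rewrite big_nil. by rewrite big_cons IH. Qed.

Lemma aeval_asumI k env (f : 'I_k -> aexp k) :
  aeval env (asum (index_enum 'I_k) f) = \sum_(i < k) aeval env (f i).
Proof. exact: aeval_asum. Qed.

Lemma eval_B k x y (tau : 'I_k -> option nat) t :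
  aeval (env_of x y tau) (Bexp t) = burnt y tau (aeval (env_of x y tau) t).
Proof.
rewrite /Bexp aeval_asumI /burnt; apply eq_bigr => i _ /=; rewrite /contrib.
case: (tau i) => [s|] //=.
rewrite /minn; set a := _ - s; set b := y i.
by case: (leqP a b) => H; case: (ltnP a b) => H'; lia.
Qed.

Definition Dsem k (y : 'I_k -> nat) (tau : 'I_k -> option nat) p :=
  \sum_(i < k) (if tau i is Some s then (if (s <= p) && ~~ (s + y i <= p) then 1 else 0) else 0).

Lemma eval_D k x y (tau : 'I_k -> option nat) t :
  aeval (env_of x y tau) (Dexp t) = Dsem y tau (aeval (env_of x y tau) t).
Proof.
rewrite /Dexp aeval_asumI /Dsem; apply: eq_bigr => i _ /=.
by case: (tau i) => [s|] //=.
Qed.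

Definition csem k x y (tau : 'I_k -> option nat) p :=
  p + (x - burnt y tau p + Dsem y tau p - 1) %/ Dsem y tau p.

Definition Bigsem k (y : 'I_k -> nat) (tau : 'I_k -> option nat) :=
  \sum_(i < k) ((if tau i is Some s then s else 0) + y i).

Definition termsem k x y (tau : 'I_k -> option nat) p :=
  if x <= burnt y tau (csem x y tau p) then csem x y tau p else Bigsem y tau.

Lemma eval_Big k x y (tau : 'I_k -> option nat) :
  aeval (env_of x y tau) (BigE k) = Bigsem y tau.
Proof. by rewrite /BigE aeval_asumI. Qed.

Lemma eval_term k x y (tau : 'I_k -> option nat) p :
  aeval (env_of x y tau) (termE p) = termsem x y tau (aeval (env_of x y tau) p).
Proof.
rewrite /termE /= !eval_B /= eval_B eval_D eval_Big.
by rewrite /termsem /csem.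
Qed.

Definition ptsem k (y : 'I_k -> nat) (tau : 'I_k -> option nat) : seq nat :=
  0 :: flatten (map (fun i => [:: (if tau i is Some s then s else 0);
                                  (if tau i is Some s then s else 0) + y i])
                  (index_enum 'I_k)).

Lemma eval_pts k x y (tau : 'I_k -> option nat) :
  map (aeval (env_of x y tau)) (ptsE k) = ptsem y tau.
Proof.
rewrite /ptsE /ptsem /=; congr (_ :: _).
by elim: (index_enum 'I_k) => [|i l IH] //=; rewrite IH.
Qed.

Lemma fold_min k env (b : aexp k) (l : seq (aexp k)) :
  let v := aeval env (foldr (fun e acc => amin e acc) b l) in
  ((v == aeval env b) || (v \in map (aeval env) l)) &&
  ((v <= aeval env b) && all (fun w => v <= w) (map (aeval env) l)).
Proof.
elim: l => [|e l IH] /=; first by rewrite eqxx leqnn.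
move: IH; set v := aeval env _.
case/andP => /orP H1 /andP [H2 H3].
case: ifP => He.
- rewrite in_cons eqxx /= orbT /= (leq_trans He H2) /= leqnn /=.
  apply/allP => w Hw; move/allP: H3 => /(_ w Hw); move: He; clear; lia.
- have Hve : v <= aeval env e by move/negbT: He; rewrite -ltnNge => /ltnW.
  rewrite H2 H3 Hve /= !andbT in_cons.
  by case: H1 => -> //; rewrite !orbT.
Qed.

Lemma max_exists (l : seq nat) t a : a < t ->
  exists p, [/\ (p == a) || (p \in l), p < t, a <= p &
            forall q, q \in l -> q < t -> q <= p].
Proof.
elim: l a => [|q l IH] a Ha.
  by exists a; split => //; rewrite eqxx.
case: (ltnP q t) => Hq.
- have Hm : maxn a q < t by rewrite gtn_max Ha Hq.
  have [p [H1 H2 H3 H4]] := IH (maxn a q) Hm.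
  exists p; split => //.
  + rewrite in_cons; case/orP: H1 => [/eqP ->|->]; last by rewrite !orbT.
    by rewrite /maxn; case: ltnP => _; rewrite eqxx ?orbT.
  + by apply: leq_trans H3; rewrite leq_maxl.
  + move=> r; rewrite inE => /orP [/eqP ->|Hr] Hrt; last by apply: H4.
    by apply: leq_trans H3; rewrite leq_maxr.
- have [p [H1 H2 H3 H4]] := IH a Ha.
  exists p; split => //.
  + by rewrite in_cons; case/orP: H1 => [->|->] //; rewrite !orbT.
  + move=> r; rewrite inE => /orP [/eqP ->|Hr] Hrt; last by apply: H4.
    lia.
Qed.

Lemma key k x y (tau : 'I_k -> option nat) ts :
  x <= burnt y tau ts -> (forall t, x <= burnt y tau t -> ts <= t) ->
  exists2 p, p \in ptsem y tau & csem x y tau p = ts.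
Proof.
move=> Hts Hmin.
case: (posnP ts) => Hts0.
  exists 0; first by rewrite inE eqxx.
  subst ts; rewrite /csem.
  have B0 : burnt y tau 0 = 0.
    rewrite /burnt; apply: big1 => i _; rewrite /contrib.
    by case: (tau i) => // s; rewrite sub0n min0n.
  move: Hts; rewrite B0 leqn0 => /eqP ->.
  case: (posnP (Dsem y tau 0)) => [->|Hd]; first by rewrite divn0.
  rewrite add0n divn_small //; lia.
have [p [H1 H2 H3 H4]] := max_exists (behead (ptsem y tau)) Hts0.
exists p.
  by case/orP: H1 => [/eqP ->|H]; rewrite inE ?eqxx // H orbT.
have Hlin : forall t, p <= t <= ts ->
  burnt y tau t = burnt y tau p + Dsem y tau p * (t - p).
  move=> t /andP [Hpt Htt].
  rewrite /burnt /Dsem big_distrl /= -big_split /=.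
  apply: eq_bigr => i _; rewrite /contrib.
  case Hti: (tau i) => [s|] //=.
  have Hs : s \in behead (ptsem y tau).
    by apply/flatten_mapP; exists i; rewrite ?mem_index_enum // Hti inE eqxx.
  have Hsy : s + y i \in behead (ptsem y tau).
    by apply/flatten_mapP; exists i; rewrite ?mem_index_enum // Hti !inE eqxx orbT.
  have A1 : s <= p \/ ts <= s.
    by case: (ltnP s ts) => h; [left; apply: H4 | right].
  have A2 : s + y i <= p \/ ts <= s + y i.
    by case: (ltnP (s + y i) ts) => h; [left; apply: H4 | right].
  case: (leqP s p) => h1; case: (leqP (s + y i) p) => h2 /=; lia.
have Hp1 : burnt y tau (ts.-1) < x.
  rewrite ltnNge; apply/negP => /Hmin; lia.
have E1 := Hlin ts.-1 (ltac:(apply/andP; split; lia)).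
have E2 := Hlin ts (ltac:(apply/andP; split; lia)).
rewrite /csem.
move: Hp1 Hts; rewrite E1 E2.
set B := burnt y tau p; set D := Dsem y tau p.
move=> Ha Hb.
have -> : (x - B + D - 1) %/ D = ts - p.
  apply/eqP; rewrite eqn_leq; apply/andP; split.
  - rewrite -ltnS ltn_divLR; nia.
  - rewrite leq_divRL; nia.
lia.
Qed.

Theorem lemma4 :
  forall k : nat, k <= 6 ->
  exists P : prog k,
    forall (x : nat) (y : 'I_k -> nat) (tau : 'I_k -> option nat),
      is_ignition_time x y tau (run P x y tau).
Proof.
move=> k _; exists (theP k) => x y tau.
have Hbig : forall t, burnt y tau t <= burnt y tau (Bigsem y tau).
  move=> t; rewrite /burnt; apply: leq_sum => i _; rewrite /contrib.
  case Hti: (tau i) => [s|] //.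
  have : s + y i <= Bigsem y tau.
    rewrite /Bigsem (bigD1 i) //= Hti; apply: leq_addr.
  lia.
cbv beta zeta iota delta [run theP p_inf p_val].
have -> : beval (env_of x y tau) (BNot (BLe (AVar (@VX k)) (Bexp (BigE k)))) =
   ~~ (x <= burnt y tau (Bigsem y tau)) by rewrite /= eval_B eval_Big.
case: ifP => Hinf.
  move=> t; apply: leq_ltn_trans (Hbig t) _; by rewrite ltnNge Hinf.
move/negbT: Hinf; rewrite negbK => Hx.
have exP : exists t, x <= burnt y tau t by exists (Bigsem y tau).
case: (ex_minnP exP) => ts Hts Hmin.
have [p Hp Hc] := key Hts Hmin.
have := fold_min (env_of x y tau) (BigE k) (map (@termE k) (ptsE k)).
rewrite -/(valE k) eval_Big -map_comp.
have -> : map (aeval (env_of x y tau) \o @termE k) (ptsE k) =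
          map (termsem x y tau) (ptsem y tau).
  by rewrite -(eval_pts x) -map_comp; apply: eq_map => e /=; rewrite -eval_term.
set v := aeval _ (valE k).
case/andP => Hv /andP [Hv1 Hv2].
have Hvalid : x <= burnt y tau v.
  case/orP: Hv => [/eqP -> //|/mapP [q _ ->]].
  by rewrite /termsem; case: ifP.
split => // t' Ht'.
apply: leq_trans (Hmin t' Ht').
have Htp : termsem x y tau p = ts by rewrite /termsem Hc Hts.
by move/allP: Hv2 => /(_ _ (map_f _ Hp)); rewrite Htp.
Qed.
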